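(* Let $p$ be an odd prime and let $h,a$ be integers with $1\le h,a\le p-1$ and $\gcd(h,a,p-1)=1$. Then $h^{h}\equiv a^{a}\pmod p$ if and only if there exists an integer $g$ with $1\le g\le p-1$ such that \[ g^{h}\equiv a \pmod p\quad\text{and}\quad g^{a}\equiv h\pmod p, \] and in that case such $g$ is unique (explicitly, $g\equiv h^{v_0}a^{u_0}\pmod p$ for any integers $u_0,v_0$ with $u_0h+v_0a\equiv 1\pmod{p-1}$). Consequently, triples $(g,h,a)$ satisfying the two congruences above correspond bijectively (via $(g,h,a)\mapsto(h,a)$) to pairs $(h,a)$ satisfying $h^h\equiv a^a\pmod p$, among those with $\gcd(h,a,p-1)=1$; in particular this holds whenever $\gcd(h,p-1)=1$ or $\gcd(a,p-1)=1$. *)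

(* Defs.v *)
From mathcomp Require Export all_boot all_algebra.
Set Implicit Arguments.
Unset Strict Implicit.
Unset Printing Implicit Defensive.

(* Main.v *)
Require Import Defs.
From mathcomp Require Import all_boot all_algebra all_field.
From mathcomp Require Import ring.
Import GRing.Theory Num.Theory.

Section Aux.
Local Open Scope ring_scope.
Variable p : nat.
Hypothesis pr : prime p.

Lemma natFp_eq (m n : nat) : (m%:R : 'F_p) = n%:R <-> (m = n %[mod p])%N.
Proof.
split => [/(congr1 (@nat_of_ord _))|E]; first by rewrite !val_Fp_nat.
by rewrite -(Fp_nat_mod pr m) E Fp_nat_mod.
Qed.

Lemma natFp_neq0 (m : nat) : (0 < m < p)%N -> (m%:R : 'F_p) != 0.
Proof.
case/andP=> m0 mp; apply/eqP => /(congr1 (@nat_of_ord _)); rewrite val_Fp_nat // modn_small //.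
by move=> E; rewrite E in m0.
Qed.

Lemma fermat1 (x : 'F_p) : x != 0 -> x ^+ p.-1 = 1.
Proof.
move=> nz; have := expf_card x; rewrite card_Fp //.
have -> : x ^+ p = x * x ^+ p.-1 by rewrite -exprS prednK // prime_gt0.
by move=> E; apply: (mulfI nz); rewrite mulr1.
Qed.

Lemma expz_mod (x : 'F_p) (m n : int) : x != 0 ->
  (m = n %[mod p.-1])%Z -> x ^ m = x ^ n.
Proof.
move=> nz /eqP; rewrite eqz_mod_dvd => /dvdzP [q Hq].
have -> : m = ((m - n) + n) by rewrite subrK.
rewrite exprzDr ?unitfE // Hq [(q * _)]mulrC -exprz_exp. idtac.
have -> : (x ^ (p.-1 : int)) = (x ^+ p.-1) by [].
by rewrite fermat1 // exp1rz mul1r.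
Qed.

Lemma expzn (x : 'F_p) (n : nat) : x ^ (n : int) = x ^+ n.
Proof. by []. Qed.

Lemma core_uniq (G H A : 'F_p) (h a : nat) (u v : int) : G != 0 ->
  G ^+ h = A -> G ^+ a = H ->
  ((u * h%:Z + v * a%:Z) = 1 %[mod p.-1])%Z -> G = H ^ v * A ^ u.
Proof.
move=> nz Gh Ga E.
rewrite -[G]expr1z -(expz_mod _ _ _ nz E) exprzDr ?unitfE //.
rewrite mulrC [(u * _)]mulrC [(v * _)]mulrC -!exprz_exp !expzn Gh Ga.
by rewrite mulrC.
Qed.

Lemma core_ex (H A : 'F_p) (h a : nat) (u v : int) : H != 0 -> A != 0 ->
  H ^+ h = A ^+ a ->
  ((u * h%:Z + v * a%:Z) = 1 %[mod p.-1])%Z ->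
  (H ^ v * A ^ u) ^+ h = A /\ (H ^ v * A ^ u) ^+ a = H.
Proof.
move=> Hn An E Ei.
have Hu : H \is a GRing.unit by rewrite unitfE.
have Au : A \is a GRing.unit by rewrite unitfE.
have HvU : H ^ v \is a GRing.unit by rewrite unitrXz.
have AuU : A ^ u \is a GRing.unit by rewrite unitrXz.
have sw : forall (x : 'F_p) (w : int) (k : nat), (x ^ w) ^+ k = (x ^+ k) ^ w.
  by move=> x w k; rewrite -!expzn !exprz_exp mulrC.
have em : forall (x : 'F_p) (w : int), x != 0 -> (w = u * h%:Z + v * a%:Z) -> x ^ w = x.
  by move=> x w xn ->; rewrite (expz_mod _ _ 1 xn Ei) expr1z.
split; rewrite exprMn !sw.
- rewrite E -!expzn !exprz_exp -exprzDr // em //; ring.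
- rewrite -E -!expzn !exprz_exp -exprzDr // em //; ring.
Qed.
End Aux.

Lemma trans_eq (p : nat) (pr : prime p) (g m n : nat) :
  (g ^ m = n %[mod p]) <-> ((g%:R : 'F_p) ^+ m = n%:R)%R.
Proof. by rewrite -natrX; split => /(natFp_eq _ pr). Qed.

Theorem mainTheorem5 (p h a : nat) :
  prime p -> odd p ->
  0 < h < p -> 0 < a < p ->
  gcdn (gcdn h a) p.-1 = 1 ->
  (* existence criterion *)
  ((h ^ h = a ^ a %[mod p]) <->
     (exists g : nat, [/\ 0 < g < p, g ^ h = a %[mod p] & g ^ a = h %[mod p]]))
  /\
  (* uniqueness of g *)
  (forall g1 g2 : nat,
     0 < g1 < p -> g1 ^ h = a %[mod p] -> g1 ^ a = h %[mod p] ->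
     0 < g2 < p -> g2 ^ h = a %[mod p] -> g2 ^ a = h %[mod p] ->
     g1 = g2)
  /\
  (* explicit formula g = h^{v0} a^{u0} in Z/pZ, for any integers u0, v0
     with u0 h + v0 a = 1 mod (p-1) *)
  (forall (g : nat) (u0 v0 : int),
     0 < g < p -> g ^ h = a %[mod p] -> g ^ a = h %[mod p] ->
     ((u0 * h%:Z + v0 * a%:Z)%R = 1 %[mod p.-1])%Z ->
     (g%:R)%R = ((h%:R)%R ^ v0 * (a%:R)%R ^ u0 :> 'F_p)%R).
Proof.
move=> pr podd hh aa gcd1.
have Hn := natFp_neq0 _ pr _ hh; have An := natFp_neq0 _ pr _ aa.
have [u [v Euv]] : exists u v : int, ((u * h%:Z + v * a%:Z)%R = 1 %[mod p.-1])%Z.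
  case: (Bezoutz h a) => u1 [v1 E1].
  case: (Bezoutz (gcdn h a) p.-1) => s [t E2].
  have E1' : (u1 * h%:Z + v1 * a%:Z)%R = Posz (gcdn h a) by rewrite E1.
  have E2' : (s * Posz (gcdn h a) + t * Posz p.-1)%R = 1%R by rewrite E2 /gcdz /= gcd1.
  exists (s * u1)%R, (s * v1)%R; apply/eqP; rewrite eqz_mod_dvd; apply/dvdzP.
  exists (- t)%R; rewrite -E2' -E1'; ring.
have third : forall (g : nat) (u0 v0 : int),
     0 < g < p -> g ^ h = a %[mod p] -> g ^ a = h %[mod p] ->
     ((u0 * h%:Z + v0 * a%:Z)%R = 1 %[mod p.-1])%Z ->
     (g%:R)%R = ((h%:R)%R ^ v0 * (a%:R)%R ^ u0 :> 'F_p)%R.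
  move=> g u0 v0 gg /(trans_eq _ pr) Gh /(trans_eq _ pr) Ga E.
  exact: core_uniq _ pr _ _ _ _ _ _ _ (natFp_neq0 _ pr _ gg) Gh Ga E.
split; last split => //.
- split.
  + rewrite trans_eq // natrX => E.
    have [Gh Ga] := core_ex _ pr _ _ _ _ _ _ Hn An E Euv.
    set G0 := ((h%:R : 'F_p) ^ v * (a%:R) ^ u)%R in Gh Ga.
    have G0n : G0 != 0%R by rewrite mulf_neq0 // expfz_neq0.
    have gE : ((G0 : nat)%:R = G0)%R := natr_Zp G0.
    exists G0; split; last first.
    * by apply/(trans_eq _ pr); rewrite gE.
    * by apply/(trans_eq _ pr); rewrite gE.
    apply/andP; split; last exact: leq_trans (ltn_ord G0) (eq_leq (Fp_cast pr)).
    rewrite lt0n; apply/eqP => g0; move: G0n; by rewrite -gE g0.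
  + case=> g [gg /(trans_eq _ pr) Gh /(trans_eq _ pr) Ga].
    by apply/(trans_eq _ pr); rewrite natrX -{1}Ga -Gh -!exprM mulnC.
- move=> g1 g2 g1p G1h G1a g2p G2h G2a.
  have := third g1 u v g1p G1h G1a Euv; rewrite -(third g2 u v g2p G2h G2a Euv).
  move/(natFp_eq _ pr); rewrite !modn_small //.
  + by case/andP: g2p.
  + by case/andP: g1p.
Qed.
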